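(* Let $R\ge1$, $\mathbf{x}$ a vector of pairwise distinct reals, $\mathbf{c}\in\mathbb{R}^R$, $B=B(\mathbf{x},\mathbf{c})$, $1\le n\le R$, and $k$ a positive integer. Let $B_{-n}$ denote the matrix obtained from $B$ by deleting its $n$-th row and $n$-th column, with rows and columns still indexed by $\{1,\dots,R\}\setminus\{n\}$. Then $$\sum_{\substack{1\le l,m\le R\\ l\ne n,\ m\ne n,\ l\ne m}} b_{n,l}\,b_{m,n}\,(B_{-n}^k)_{l,m}=0.$$ Equivalently, for every $k\ge1$ the off-diagonal entries of $B_{-n}^k$ satisfy this weighted vanishing relation.
   Context: For pairwise distinct reals $x_1,\dots,x_R$ and reals $c_1,\dots,c_R$, $B=B(\mathbf{x},\mathbf{c})$ is the $R\times R$ matrix with entries $b_{m,m}=0$ and $b_{m,n}=\frac{c_mc_n}{x_m-x_n}$ for $m\ne n$. *)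

(* Defs.v *)
From HB Require Import structures.
From mathcomp Require Import all_boot all_order all_algebra.
Set Implicit Arguments. Unset Strict Implicit. Unset Printing Implicit Defensive.
Import Order.TTheory GRing.Theory Num.Theory.
Local Open Scope ring_scope.

Definition Bmat (F : fieldType) (N : nat) (x c : 'I_N -> F) : 'M[F]_N :=
  \matrix_(m, n) (if m == n then 0 else c m * c n / (x m - x n)).

(* B_{-n}: delete row and column n; index i : 'I_N.-1 stands for lift n i,
   i.e. {1..N} \ {n} in increasing order. *)
Definition delmx (F : fieldType) (r : nat) (n : 'I_r.+1) (A : 'M[F]_r.+1)
  : 'M[F]_r := \matrix_(i, j) A (lift n i) (lift n j).

(* Main.v *)
Require Import Defs.
From HB Require Import structures.
From mathcomp Require Import all_boot all_order all_algebra.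
From mathcomp Require Import ring.
Import Order.TTheory GRing.Theory Num.Theory.
Local Open Scope ring_scope.

Theorem lemma1 (F : realFieldType) (r : nat) (x c : 'I_r.+1 -> F)
  (hx : injective x) (n : 'I_r.+1) (k : nat) (hk : (0 < k)%N) :
  \sum_(l < r) \sum_(m < r | l != m)
     Bmat x c n (lift n l) * Bmat x c (lift n m) n
       * ((delmx n (Bmat x c)) ^+ k) l m = 0.
Proof.
set M := delmx n (Bmat x c).
set P := M ^+ k.
have dx : forall a b : 'I_r.+1, a != b -> x a - x b != 0.
  by move=> a b ab; rewrite subr_eq0; apply: contra ab => /eqP /hx ->.
have dl : forall i j : 'I_r, i != j -> x (lift n i) - x (lift n j) != 0.
  by move=> i j ij; apply: dx; rewrite (inj_eq (@lift_inj _ n)).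
have ME : forall i j, M i j = if i == j then 0 else
     c (lift n i) * c (lift n j) / (x (lift n i) - x (lift n j)).
  by move=> i j; rewrite /M /delmx /Bmat !mxE (inj_eq (@lift_inj _ n)).
have MA : forall i j, M i j = - M j i.
  move=> i j; rewrite !ME. case: (boolP (i == j)) => [/eqP e|ij]; first by rewrite e eqxx oppr0.
  rewrite eq_sym (negbTE ij).
  have h1 := dl _ _ ij.
  have h2 : x (lift n j) - x (lift n i) != 0 by apply: dl; rewrite eq_sym.
  by field; rewrite h1 h2.
pose w (i : 'I_r) := (x n - x (lift n i))^-1.
have term : forall l m : 'I_r, l != m ->
  Bmat x c n (lift n l) * Bmat x c (lift n m) n * P l m
   = - c n ^+ 2 * (M l m * (w l - w m) * P l m).
  move=> l m lm; rewrite ME (negbTE lm) /Bmat !mxE.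
  have h1 := dl _ _ lm.
  have h2 : x n - x (lift n l) != 0 by apply: dx; rewrite neq_lift.
  have h3 : x n - x (lift n m) != 0 by apply: dx; rewrite neq_lift.
  have h4 : x (lift n m) - x n != 0 by apply: dx; rewrite eq_sym neq_lift.
  rewrite (negbTE (neq_lift n l)) eq_sym (negbTE (neq_lift n m)) /w.
  move: (P l m) => p. field; by rewrite ?h1 ?h2 ?h3 ?h4.
rewrite (eq_bigr (fun l => - c n ^+ 2 * \sum_(m < r) M l m * (w l - w m) * P l m)).
  rewrite -mulr_sumr.
  suff -> : \sum_(l < r) \sum_(m < r) M l m * (w l - w m) * P l m = 0 by rewrite mulr0.
  have comm : P *m M = M *m P by rewrite !mulmxE /P -exprSr exprS.
  have eA : \sum_(l < r) \sum_(m < r) M l m * (w l - w m) * P l m =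
    \sum_(l < r) \sum_(m < r) M l m * w l * P l m - \sum_(l < r) \sum_(m < r) M l m * w m * P l m.
    rewrite -sumrB; apply: eq_bigr => l _; rewrite -sumrB; apply: eq_bigr => m _.
    move: (P l m) (M l m) => p q; ring.
  rewrite eA; apply/eqP; rewrite subr_eq0; apply/eqP.
  transitivity (- \sum_(l < r) w l * (M *m P) l l).
    rewrite -sumrN; apply: eq_bigr => l _; rewrite -comm mxE mulr_sumr -sumrN.
    apply: eq_bigr => m _; rewrite (MA l m).
    move: (P l m) (M m l) => p q; ring.
  rewrite exchange_big /= -sumrN; apply: eq_bigr => m _; rewrite mxE mulr_sumr -sumrN.
  apply: eq_bigr => l _; rewrite (MA l m).
  move: (P l m) (M m l) => p q; ring.
move=> l _; rewrite [in RHS](bigD1 l) //= subrr mulr0 mul0r add0r mulr_sumr.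
apply: eq_big => [m|m lm]; first by rewrite eq_sym.
by rewrite term.
Qed.
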